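(* Let $\mathcal{C}$ be a path category and let $\mathcal{D}$ be a class of display maps with weak (respectively strong) homotopy $\Pi$-types in $\mathcal{C}$. Let $\overline{\mathcal{D}}$ be the closure of $\mathcal{D}$ under composition. Then for all composable $d: X \to I$ in $\mathcal{D}$ and $f: I \to J$ in $\overline{\mathcal{D}}$, the weak (respectively strong) homotopy $\Pi$-type $\Pi_f(d)$ exists.
   Context: A path category is a category with two classes of maps, fibrations and weak equivalences, such that: fibrations are closed under composition and contain the isomorphisms; pullbacks of fibrations along arbitrary maps exist and are fibrations; there is a terminal object and every map to it is a fibration; isomorphisms are weak equivalences; weak equivalences satisfy 2-out-of-6; every object $X$ has a path object, a factorisation of the diagonal as a weak equivalence $X \to PX$ followed by a fibration $(s,t): PX \to X\times X$; pullbacks of trivial fibrations are trivial fibrations; every trivial fibration has a section. For a fibration $p: Y \to A$ one similarly factors $Y \to Y\times_A Y$ to get a fibrewise path object $P_A Y$, and two maps $m, m': D \to Y$ over $A$ are fibrewise homotopic ($m \simeq_A m'$) if there is $H: D \to P_A Y$ with $(s,t)H = (m,m')$. Homotopy $\Pi$-types: given fibrations $g: C \to B$ and $f: B \to A$, a weak homotopy $\Pi$-type $\Pi_f(g)$ is a fibration $\pi: \Pi \to A$ with a map $\varepsilon: \Pi\times_A B \to C$ satisfying $g\varepsilon = $ the projection to $B$, such that for every map $h: D \to A$ and every $m: D\times_A B \to C$ with $gm$ equal to the projection to $B$, there is $k: D \to \Pi$ with $\pi k = h$ and $\varepsilon\circ(k\times_A B) \simeq_B m$; it is strong if moreover for any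 $k, k': D \to \Pi$ over $A$ with $\varepsilon(k\times_A B) \simeq_B \varepsilon(k'\times_A B)$ we have $k \simeq_A k'$. A class $\mathcal{D}$ of fibrations is a class of display maps with weak (strong) homotopy $\Pi$-types if: every identity map lies in $\mathcal{D}$; the pullback of a map in $\mathcal{D}$ along any map can be found in $\mathcal{D}$; and for all composable $d: X \to I$, $e: I \to J$ in $\mathcal{D}$ a weak (strong) homotopy $\Pi$-type $\Pi_e(d)$ exists and can be found in $\mathcal{D}$. *)

(* Defs.v *)
Unset Implicit Arguments.


Record Category := {
  Ob :> Type;
  Hom : Ob -> Ob -> Type;
  idm : forall X : Ob, Hom X X;
  comp : forall {X Y Z : Ob}, Hom Y Z -> Hom X Y -> Hom X Z;
  comp_assoc : forall (X Y Z W : Ob) (f : Hom X Y) (g : Hom Y Z) (h : Hom Z W),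
      comp h (comp g f) = comp (comp h g) f;
  comp_idl : forall (X Y : Ob) (f : Hom X Y), comp (idm Y) f = f;
  comp_idr : forall (X Y : Ob) (f : Hom X Y), comp f (idm X) = f
}.

Arguments Hom {c} _ _.
Arguments idm {c} _.
Arguments comp {c} {X Y Z} _ _.

Notation "g ∘ f" := (comp g f) (at level 40, left associativity).

Section Basics.
Context {C : Category}.

Definition is_iso {X Y : C} (f : Hom X Y) : Prop :=
  exists g : Hom Y X, g ∘ f = idm X /\ f ∘ g = idm Y.

Definition is_terminal (T : C) : Prop :=
  forall X : C, exists f : Hom X T, forall g : Hom X T, g = f.

Definition is_pullback {X Y A : C} (f : Hom X A) (g : Hom Y A)
    (P : C) (p1 : Hom P X) (p2 : Hom P Y) : Prop :=
  f ∘ p1 = g ∘ p2 /\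
  forall (Z : C) (u : Hom Z X) (v : Hom Z Y), f ∘ u = g ∘ v ->
    exists w : Hom Z P, p1 ∘ w = u /\ p2 ∘ w = v /\
      forall w' : Hom Z P, p1 ∘ w' = u -> p2 ∘ w' = v -> w' = w.

Definition is_product (X Y P : C) (p1 : Hom P X) (p2 : Hom P Y) : Prop :=
  forall (Z : C) (u : Hom Z X) (v : Hom Z Y),
    exists w : Hom Z P, p1 ∘ w = u /\ p2 ∘ w = v /\
      forall w' : Hom Z P, p1 ∘ w' = u -> p2 ∘ w' = v -> w' = w.
End Basics.

Record PathCategory := {
  pc_cat :> Category;
  fib : forall {X Y : pc_cat}, Hom X Y -> Prop;
  weq : forall {X Y : pc_cat}, Hom X Y -> Prop;
  fib_comp : forall (X Y Z : pc_cat) (f : Hom X Y) (g : Hom Y Z),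
      fib f -> fib g -> fib (g ∘ f);
  fib_iso : forall (X Y : pc_cat) (f : Hom X Y), is_iso f -> fib f;
  fib_pullback : forall (X Y A : pc_cat) (p : Hom Y A) (f : Hom X A),
      fib p -> exists (P : pc_cat) (p1 : Hom P X) (p2 : Hom P Y),
        is_pullback f p P p1 p2 /\ fib p1;
  terminal_fib : exists T : pc_cat, is_terminal T /\
      forall (X : pc_cat) (f : Hom X T), fib f;
  weq_iso : forall (X Y : pc_cat) (f : Hom X Y), is_iso f -> weq f;
  weq_2of6 : forall (A B C D : pc_cat) (f : Hom A B) (g : Hom B C) (h : Hom C D),
      weq (g ∘ f) -> weq (h ∘ g) ->
      weq f /\ weq g /\ weq h /\ weq (h ∘ g ∘ f);
  path_object : forall X : pc_cat,
      exists (PX : pc_cat) (r : Hom X PX) (s t : Hom PX X)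
             (XX : pc_cat) (pr1 pr2 : Hom XX X) (u : Hom PX XX),
        is_product X X XX pr1 pr2 /\ weq r /\ s ∘ r = idm X /\ t ∘ r = idm X /\
        pr1 ∘ u = s /\ pr2 ∘ u = t /\ fib u;
  trivfib_pullback : forall (X Y A P : pc_cat) (p : Hom Y A) (f : Hom X A)
      (p1 : Hom P X) (p2 : Hom P Y),
      fib p -> weq p -> is_pullback f p P p1 p2 -> fib p1 /\ weq p1;
  trivfib_section : forall (X Y : pc_cat) (p : Hom X Y),
      fib p -> weq p -> exists s : Hom Y X, p ∘ s = idm Y
}.


Arguments fib {p0} {X Y} _.
Arguments weq {p0} {X Y} _.
Section PathCat.
Context {C : PathCategory}.

(* (P, r, s, t) is a fibrewise path object for p : Y -> A: the diagonal
   Y -> Y x_A Y factors as the weak equivalence r : Y -> P followed by the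
   fibration (s,t) : P -> Y x_A Y. *)
Definition is_fib_path_obj {Y A : C} (p : Hom Y A)
    (P : C) (r : Hom Y P) (s t : Hom P Y) : Prop :=
  exists (Q : C) (q1 q2 : Hom Q Y) (u : Hom P Q),
    is_pullback p p Q q1 q2 /\ weq r /\ s ∘ r = idm Y /\ t ∘ r = idm Y /\
    q1 ∘ u = s /\ q2 ∘ u = t /\ fib u.

Definition fhtpy {Y A D : C} (p : Hom Y A) (m m' : Hom D Y) : Prop :=
  exists (P : C) (r : Hom Y P) (s t : Hom P Y),
    is_fib_path_obj p P r s t /\
    exists H : Hom D P, s ∘ H = m /\ t ∘ H = m'.

Definition is_hPi (strong : bool) {Cc B A : C} (g : Hom Cc B) (f : Hom B A)
    (Pi : C) (pi : Hom Pi A) : Prop :=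
  fib pi /\
  exists (Q : C) (q1 : Hom Q Pi) (q2 : Hom Q B) (eps : Hom Q Cc),
    is_pullback pi f Q q1 q2 /\ g ∘ eps = q2 /\
    (forall (D : C) (h : Hom D A) (E : C) (e1 : Hom E D) (e2 : Hom E B),
       is_pullback h f E e1 e2 ->
       forall m : Hom E Cc, g ∘ m = e2 ->
       exists k : Hom D Pi, pi ∘ k = h /\
         forall w : Hom E Q, q1 ∘ w = k ∘ e1 -> q2 ∘ w = e2 ->
           fhtpy g (eps ∘ w) m) /\
    (strong = true ->
     forall (D : C) (k k' : Hom D Pi), pi ∘ k = pi ∘ k' ->
     forall (E : C) (e1 : Hom E D) (e2 : Hom E B),
       is_pullback (pi ∘ k) f E e1 e2 ->
       forall w w' : Hom E Q,
         q1 ∘ w = k ∘ e1 -> q2 ∘ w = e2 ->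
         q1 ∘ w' = k' ∘ e1 -> q2 ∘ w' = e2 ->
         fhtpy g (eps ∘ w) (eps ∘ w') -> fhtpy pi k k').

Definition MapClass := forall X Y : C, Hom X Y -> Prop.

Definition is_display_class (strong : bool) (Dc : MapClass) : Prop :=
  (forall (X Y : C) (f : Hom X Y), Dc X Y f -> fib f) /\
  (forall X : C, Dc X X (idm X)) /\
  (forall (X I J : C) (d : Hom X I) (f : Hom J I), Dc X I d ->
     exists (P : C) (p1 : Hom P J) (p2 : Hom P X),
       is_pullback f d P p1 p2 /\ Dc P J p1) /\
  (forall (X I J : C) (d : Hom X I) (e : Hom I J), Dc X I d -> Dc I J e ->
     exists (Pi : C) (pi : Hom Pi J), is_hPi strong d e Pi pi /\ Dc Pi J pi).

Inductive comp_closure (Dc : MapClass) : MapClass :=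
| cc_base : forall (X Y : C) (f : Hom X Y), Dc X Y f -> comp_closure Dc X Y f
| cc_comp : forall (X Y Z : C) (f : Hom X Y) (g : Hom Y Z),
    comp_closure Dc X Y f -> comp_closure Dc Y Z g -> comp_closure Dc X Z (g ∘ f).
End PathCat.

(* Main.v *)
Require Import Defs.

Section PC.
Context {C : PathCategory}.

Lemma ext_assoc {X Y Z : C} (p : Hom Y Z) (q : Hom X Y) (r : Hom X Z) :
  p ∘ q = r -> forall W (y : Hom W X), p ∘ (q ∘ y) = r ∘ y.
Proof. intros H W y. rewrite comp_assoc, H. reflexivity. Qed.

Ltac rnorm := repeat rewrite <- comp_assoc; rewrite ?comp_idl, ?comp_idr.
Ltac rw H := let H' := fresh in pose proof (ext_assoc _ _ _ H) as H';
  rnorm; rewrite ?H', ?H; clear H'; rnorm.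

Lemma weq_id (X : C) : weq (idm X).
Proof. apply weq_iso. exists (idm X). rewrite comp_idl. auto. Qed.

Lemma weq_comp {X Y Z : C} (f : Hom X Y) (g : Hom Y Z) : weq f -> weq g -> weq (g ∘ f).
Proof.
  intros Hf Hg. destruct (weq_2of6 C X Y Y Z f (idm Y) g) as [_ [_ [_ H]]];
  rewrite ?comp_idl, ?comp_idr in *; auto.
Qed.

Lemma weq_2of3_l {X Y Z : C} (f : Hom X Y) (g : Hom Y Z) : weq (g ∘ f) -> weq g -> weq f.
Proof.
  intros H1 H2. destruct (weq_2of6 C X Y Z Z f g (idm Z)) as [H _];
  rewrite ?comp_idl; auto.
Qed.

Lemma weq_2of3_r {X Y Z : C} (f : Hom X Y) (g : Hom Y Z) : weq f -> weq (g ∘ f) -> weq g.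
Proof.
  intros H1 H2. destruct (weq_2of6 C X X Y Z (idm X) f g) as [_ [_ [H _]]];
  rewrite ?comp_idr; auto.
Qed.

Lemma weq_section {X Y : C} (p : Hom X Y) (s : Hom Y X) : p ∘ s = idm Y -> weq p -> weq s.
Proof. intros H Hp. apply (weq_2of3_l s p); [rewrite H; apply weq_id | exact Hp]. Qed.

Lemma weq_retr {X Y : C} (s : Hom X Y) (r : Hom Y X) : s ∘ r = idm Y -> weq r -> weq s.
Proof. intros H Hr. apply (weq_2of3_r r s); [exact Hr | rewrite H; apply weq_id]. Qed.

Lemma pb_sym {X Y A P : C} (f : Hom X A) (g : Hom Y A) (p1 : Hom P X) (p2 : Hom P Y) :
  is_pullback f g P p1 p2 -> is_pullback g f P p2 p1.
Proof.
  intros [E U]. split; auto.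
  intros Z u v Huv. destruct (U Z v u (eq_sym Huv)) as [w [H1 [H2 H3]]].
  exists w. split; [exact H2|]. split; [exact H1|]. intros w' A1 A2; auto.
Qed.

Lemma pb_ext {X Y A P : C} {f : Hom X A} {g : Hom Y A} {p1 : Hom P X} {p2 : Hom P Y} :
  is_pullback f g P p1 p2 -> forall Z (w w' : Hom Z P),
  p1 ∘ w = p1 ∘ w' -> p2 ∘ w = p2 ∘ w' -> w = w'.
Proof.
  intros [E U] Z w w' H1 H2.
  destruct (U Z (p1 ∘ w) (p2 ∘ w)) as [v [_ [_ H3]]].
  { rewrite !comp_assoc, E. reflexivity. }
  rewrite (H3 w); auto. rewrite (H3 w'); auto.
Qed.

Lemma pb_lift {X Y A P : C} {f : Hom X A} {g : Hom Y A} {p1 : Hom P X} {p2 : Hom P Y} :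
  is_pullback f g P p1 p2 -> forall Z (u : Hom Z X) (v : Hom Z Y), f ∘ u = g ∘ v ->
  exists w, p1 ∘ w = u /\ p2 ∘ w = v.
Proof.
  intros [E U] Z u v H. destruct (U Z u v H) as [w [H1 [H2 _]]]. eauto.
Qed.

Lemma pb_fib {X Y A P : C} (f : Hom X A) (g : Hom Y A) (p1 : Hom P X) (p2 : Hom P Y) :
  is_pullback f g P p1 p2 -> fib g -> fib p1.
Proof.
  intros Hpb Hg.
  destruct (fib_pullback C X Y A g f Hg) as [P' [q1 [q2 [Hpb' Hq1]]]].
  destruct (pb_lift Hpb' P p1 p2 (proj1 Hpb)) as [w [Hw1 Hw2]].
  destruct (pb_lift Hpb P' q1 q2 (proj1 Hpb')) as [v [Hv1 Hv2]].
  assert (Hiso : is_iso w).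
  { exists v. split.
    - apply (pb_ext Hpb); rnorm; rw Hv1; rw Hv2; rw Hw1; rw Hw2; reflexivity.
    - apply (pb_ext Hpb'); rnorm; rw Hw1; rw Hw2; rw Hv1; rw Hv2; reflexivity. }
  rewrite <- Hw1. apply fib_comp; auto. apply fib_iso; auto.
Qed.


Lemma fpo_facts {Y A P : C} (p : Hom Y A) (r : Hom Y P) (s t : Hom P Y) :
  is_fib_path_obj p P r s t -> fib p ->
  fib s /\ fib t /\ weq s /\ weq t /\ weq r /\ s ∘ r = idm Y /\ t ∘ r = idm Y /\ p ∘ s = p ∘ t.
Proof.
  intros [Q [q1 [q2 [u [Hpb [Hr [Hsr [Htr [Hs [Ht Hu]]]]]]]]]] Hp.
  assert (F1 : fib q1) by (apply (pb_fib _ _ _ _ Hpb Hp)).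
  assert (F2 : fib q2) by (apply (pb_fib _ _ _ _ (pb_sym _ _ _ _ Hpb) Hp)).
  subst s t. split; [apply fib_comp; auto|]. split; [apply fib_comp; auto|].
  split; [apply (weq_retr _ r); auto|]. split; [apply (weq_retr _ r); auto|].
  split; auto. split; auto. split; auto.
  rewrite !comp_assoc, (proj1 Hpb). reflexivity.
Qed.

Lemma terminal_ex : exists T : C, (forall X (g g' : Hom X T), g = g') /\
  (forall X, exists h : Hom X T, True) /\ (forall X (g : Hom X T), fib g).
Proof.
  destruct (terminal_fib C) as [T [HT HF]]. exists T. split; [|split; auto].
  - intros X g g'. destruct (HT X) as [h Hh]. rewrite (Hh g), (Hh g'). auto.
  - intros X. destruct (HT X) as [h _]. eauto.
Qed.

Lemma prod_pb {X Y T P : C} (pr1 : Hom P X) (pr2 : Hom P Y) (tX : Hom X T) (tY : Hom Y T) :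
  (forall Z (g g' : Hom Z T), g = g') -> is_product X Y P pr1 pr2 ->
  is_pullback tX tY P pr1 pr2.
Proof.
  intros HT Hp. split; [apply HT|]. intros Z u v _. apply Hp.
Qed.

Lemma brown {X Y : C} (f : Hom X Y) :
  exists (Z : C) (i : Hom X Z) (p : Hom Z Y), weq i /\ fib p /\ p ∘ i = f.
Proof.
  destruct terminal_ex as [T [HT [Hex HTf]]].
  destruct (path_object C Y) as [PY [r [s [t [YY [pr1 [pr2 [u
     [Hprod [Hr [Hsr [Htr [Hs [Ht Hu]]]]]]]]]]]]]].
  destruct (Hex Y) as [tY _]. destruct (Hex X) as [tX _].
  assert (PYY := prod_pb pr1 pr2 tY tY HT Hprod).
  assert (Fpr1 : fib pr1) by (apply (pb_fib _ _ _ _ PYY (HTf _ _))).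
  assert (Fs : fib s) by (subst s; apply fib_comp; auto).
  assert (Ws : weq s) by (apply (weq_retr _ r); auto).
  destruct (fib_pullback C X PY Y s f Fs) as [Z [z1 [z2 [HZ Fz1]]]].
  destruct (trivfib_pullback C X PY Y Z s f z1 z2 Fs Ws HZ) as [_ Wz1].
  destruct (pb_lift HZ X (idm X) (r ∘ f)) as [i [Hi1 Hi2]].
  { rnorm. rw Hsr. reflexivity. }
  exists Z, i, (t ∘ z2). split; [|split].
  - apply (weq_2of3_l i z1); auto. rewrite Hi1. apply weq_id.
  - destruct (fib_pullback C X Y T tY tX (HTf _ _)) as [XY [q1 [q2 [HXY _]]]].
    assert (Fq2 : fib q2) by (apply (pb_fib _ _ _ _ (pb_sym _ _ _ _ HXY) (HTf _ _))).
    destruct (Hprod XY (f ∘ q1) q2) as [fx [Hfx1 [Hfx2 _]]].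
    destruct (pb_lift HXY Z z1 (t ∘ z2)) as [ze [Hze1 Hze2]]. { apply HT. }
    assert (Hsq : is_pullback fx u Z ze z2).
    { split.
      - destruct (Hprod Z (s ∘ z2) (t ∘ z2)) as [w0 [_ [_ Hw0]]].
        assert (A1 : fx ∘ ze = w0).
        { apply Hw0; rnorm.
          + rw Hfx1. rw Hze1. exact (proj1 HZ).
          + rw Hfx2. rw Hze2. reflexivity. }
        assert (A2 : u ∘ z2 = w0).
        { apply Hw0; rnorm.
          + rw Hs. reflexivity.
          + rw Ht. reflexivity. }
        rewrite A1, A2. reflexivity.
      - intros W a b Hab.
        assert (E1 : f ∘ (q1 ∘ a) = s ∘ b).
        { subst s. rnorm.
          rewrite <- Hab. rnorm. rw Hfx1. reflexivity. }
        destruct (pb_lift HZ W (q1 ∘ a) b E1) as [w [Hw1 Hw2]].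
        assert (E2 : ze ∘ w = a).
        { apply (pb_ext HXY); rnorm.
          - rw Hze1. exact Hw1.
          - rw Hze2. rw Hw2. subst t. rnorm.
            pose proof (f_equal (fun k => pr2 ∘ k) Hab) as Hab'. simpl in Hab'.
            rnorm. rewrite <- Hab'. rw Hfx2. reflexivity. }
        exists w. split; [exact E2|]. split; [exact Hw2|].
        intros w' A1 A2. apply (pb_ext HZ).
        + rewrite Hw1, <- A1. rnorm. rw Hze1. reflexivity.
        + rewrite A2, Hw2. reflexivity. }
    rewrite <- Hze2. apply fib_comp; auto. apply (pb_fib _ _ _ _ Hsq Hu).
  - rnorm. rw Hi2. rw Htr. reflexivity.
Qed.


Lemma htpy_trans {X I D P : C} (d : Hom X I) (r : Hom X P) (s t : Hom P X) (G1 G2 : Hom D P) :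
  fib d -> is_fib_path_obj d P r s t -> t ∘ G1 = s ∘ G2 -> fhtpy d (s ∘ G1) (t ∘ G2).
Proof.
  intros Fd HP HG.
  destruct (fpo_facts d r s t HP Fd) as [Fs [Ft [Ws [Wt [Wr [Hsr [Htr Hds]]]]]]].
  destruct HP as [XX [x1 [x2 [u [HXX [_ [_ [_ [Hs [Ht Hu]]]]]]]]]].
  destruct (fib_pullback C P P X s t Fs) as [PP [a [b [HPP _]]]].
  destruct (trivfib_pullback C P P X PP s t a b Fs Ws HPP) as [_ Wa].
  destruct (pb_lift HXX PP (s ∘ a) (t ∘ b)) as [v [Hv1 Hv2]].
  { rnorm. rw Hds. rewrite (proj1 HPP). rnorm. rw Hds. reflexivity. }
  destruct (brown v) as [W [i [p [Wi [Fp Hpi]]]]].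
  destruct (pb_lift HPP X r r) as [rr [Hrr1 Hrr2]]. { rewrite Hsr, Htr. reflexivity. }
  destruct (pb_lift HPP D G1 G2 HG) as [GG [HGG1 HGG2]].
  exists W, (i ∘ rr), (x1 ∘ p), (x2 ∘ p). split.
  - exists XX, x1, x2, p. split; [exact HXX|]. split.
    + apply weq_comp; auto. apply (weq_2of3_l rr a); auto. rewrite Hrr1. auto.
    + split; [|split; [|split; [|split]]]; auto.
      * rnorm. rw Hpi. rw Hv1. rw Hrr1. exact Hsr.
      * rnorm. rw Hpi. rw Hv2. rw Hrr2. exact Htr.
  - exists (i ∘ GG). split; rnorm; rw Hpi.
    + rw Hv1. rw HGG1. reflexivity.
    + rw Hv2. rw HGG2. reflexivity.
Qed.


Lemma htpy_map {Q X I D : C} (q : Hom Q I) (d : Hom X I) (eps : Hom Q X) (al be : Hom D Q)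
  (P : C) (r : Hom X P) (s t : Hom P X) :
  fib d -> fib q -> d ∘ eps = q -> fhtpy q al be -> is_fib_path_obj d P r s t ->
  exists G : Hom D P, s ∘ G = eps ∘ al /\ t ∘ G = eps ∘ be.
Proof.
  intros Fd Fq Heps [P' [r' [s' [t' [HP' [H' [HH1 HH2]]]]]]] HP.
  destruct (fpo_facts q r' s' t' HP' Fq) as [Fs' [Ft' [Ws' [Wt' [Wr' [Hsr' [Htr' Hqs']]]]]]].
  destruct (fpo_facts d r s t HP Fd) as [Fs [Ft [Ws [Wt [Wr [Hsr [Htr Hds]]]]]]].
  destruct HP as [XX [x1 [x2 [u [HXX [_ [_ [_ [Hs [Ht Hu]]]]]]]]]].
  destruct (pb_lift HXX P' (eps ∘ s') (eps ∘ t')) as [al' [Ha1 Ha2]].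
  { rnorm. rw Heps. exact Hqs'. }
  destruct (fib_pullback C P' P XX u al' Hu) as [Z [z1 [z2 [HZ Fz1]]]].
  destruct (pb_lift HZ Q r' (r ∘ eps)) as [j [Hj1 Hj2]].
  { apply (pb_ext HXX); rnorm.
    - rw Ha1. rw Hsr'. rw Hs. rw Hsr. reflexivity.
    - rw Ha2. rw Htr'. rw Ht. rw Htr. reflexivity. }
  destruct (brown j) as [W [i [p [Wi [Fp Hpi]]]]].
  assert (Wzp : weq (z1 ∘ p)).
  { apply (weq_2of3_r i); auto. rnorm. rw Hpi. rw Hj1. exact Wr'. }
  destruct (trivfib_section C W P' (z1 ∘ p) (fib_comp _ _ _ _ _ _ Fp Fz1) Wzp) as [sg Hsg].
  assert (Hsg' : forall D' (y : Hom D' P'), z1 ∘ (p ∘ (sg ∘ y)) = y).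
  { intros D' y. rewrite !comp_assoc, Hsg, comp_idl. reflexivity. }
  exists (z2 ∘ (p ∘ (sg ∘ H'))). split.
  - rewrite <- Hs. pose proof (eq_sym (proj1 HZ)) as HZe. rw HZe. rewrite Hsg'.
    rw Ha1. rw HH1. reflexivity.
  - rewrite <- Ht. pose proof (eq_sym (proj1 HZ)) as HZe. rw HZe. rewrite Hsg'.
    rw Ha2. rw HH2. reflexivity.
Qed.


Lemma htpy_pb {Pi K I Q1 P D : C} (pi : Hom Pi K) (f : Hom I K) (q1 : Hom Q1 Pi)
  (q2 : Hom Q1 I) (r : Hom Pi P) (s t : Hom P Pi) (al be : Hom D Q1) (G : Hom D P) :
  fib pi -> fib f -> is_pullback pi f Q1 q1 q2 -> is_fib_path_obj pi P r s t ->
  s ∘ G = q1 ∘ al -> t ∘ G = q1 ∘ be -> q2 ∘ al = q2 ∘ be -> fhtpy q2 al be.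
Proof.
  intros Fpi Ff HQ1 HP HG1 HG2 Hab.
  destruct (fpo_facts pi r s t HP Fpi) as [Fs [Ft [Ws [Wt [Wr [Hsr [Htr Hps]]]]]]].
  destruct HP as [PP [c1 [c2 [u [HPP [_ [_ [_ [Hs [Ht Hu]]]]]]]]]].
  assert (Fq2 : fib q2) by (apply (pb_fib _ _ _ _ (pb_sym _ _ _ _ HQ1) Fpi)).
  pose proof (proj1 HQ1) as EQ1.
  destruct (fib_pullback C P I K f (pi ∘ s) Ff) as [P' [p1 [p2 [HP' _]]]].
  assert (EP' : pi ∘ (s ∘ p1) = f ∘ p2) by (rewrite comp_assoc; exact (proj1 HP')).
  destruct (pb_lift HQ1 P' (s ∘ p1) p2) as [s' [Hs'1 Hs'2]]. { rnorm. exact EP'. }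
  destruct (pb_lift HQ1 P' (t ∘ p1) p2) as [t' [Ht'1 Ht'2]].
  { rnorm. rewrite <- EP'. rnorm. rw Hps. reflexivity. }
  destruct (pb_lift HP' Q1 (r ∘ q1) q2) as [r' [Hr'1 Hr'2]].
  { rnorm. rw Hsr. exact EQ1. }
  destruct (fib_pullback C Q1 Q1 I q2 q2 Fq2) as [QQ [y1 [y2 [HQQ _]]]].
  pose proof (proj1 HQQ) as EQQ.
  destruct (pb_lift HQQ P' s' t') as [u' [Hu'1 Hu'2]]. { rewrite Hs'2, Ht'2. reflexivity. }
  destruct (pb_lift HPP QQ (q1 ∘ y1) (q1 ∘ y2)) as [g [Hg1 Hg2]].
  { rnorm. rw EQ1. rw EQQ. rw EQ1. reflexivity. }
  assert (Hsq : is_pullback g u P' u' p1).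
  { split.
    - apply (pb_ext HPP); rnorm.
      + rw Hg1. rw Hu'1. rw Hs'1. rw Hs. reflexivity.
      + rw Hg2. rw Hu'2. rw Ht'1. rw Ht. reflexivity.
    - intros Z a b Hab'.
      assert (E1 : c1 ∘ (g ∘ a) = c1 ∘ (u ∘ b)) by (rewrite Hab'; reflexivity).
      assert (E2 : c2 ∘ (g ∘ a) = c2 ∘ (u ∘ b)) by (rewrite Hab'; reflexivity).
      revert E1 E2. rnorm. rw Hg1. rw Hg2. rw Hs. rw Ht. intros E1 E2.
      destruct (pb_lift HP' Z b (q2 ∘ (y1 ∘ a))) as [w [Hw1 Hw2]].
      { rnorm. rewrite <- E1. rw EQ1. reflexivity. }
      assert (Ws1 : s' ∘ w = y1 ∘ a).
      { apply (pb_ext HQ1); rnorm.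
        - rw Hs'1. rw Hw1. symmetry. exact E1.
        - rw Hs'2. rw Hw2. reflexivity. }
      assert (Wt1 : t' ∘ w = y2 ∘ a).
      { apply (pb_ext HQ1); rnorm.
        - rw Ht'1. rw Hw1. symmetry. exact E2.
        - rw Ht'2. rw Hw2. rw EQQ. reflexivity. }
      exists w. split; [|split; [exact Hw1|]].
      + apply (pb_ext HQQ); rnorm.
        * rw Hu'1. exact Ws1.
        * rw Hu'2. exact Wt1.
      + intros w' A1 A2. apply (pb_ext HP').
        * rewrite A2, Hw1. reflexivity.
        * rewrite Hw2, <- A1. rnorm. rw Hu'1. rw Hs'2. reflexivity. }
  assert (Fu' : fib u') by (apply (pb_fib _ _ _ _ Hsq Hu)).
  assert (Hs'r' : s' ∘ r' = idm Q1).
  { apply (pb_ext HQ1); rnorm.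
    - rw Hs'1. rw Hr'1. rw Hsr. reflexivity.
    - rw Hs'2. rw Hr'2. reflexivity. }
  assert (Ht'r' : t' ∘ r' = idm Q1).
  { apply (pb_ext HQ1); rnorm.
    - rw Ht'1. rw Hr'1. rw Htr. reflexivity.
    - rw Ht'2. rw Hr'2. reflexivity. }
  assert (Hsq2 : is_pullback q1 s P' s' p1).
  { split; [exact Hs'1|].
    intros Z a b Hab'.
    destruct (pb_lift HP' Z b (q2 ∘ a)) as [w [Hw1 Hw2]].
    { rnorm. rewrite <- Hab'. rw EQ1. reflexivity. }
    assert (Ws1 : s' ∘ w = a).
    { apply (pb_ext HQ1); rnorm.
      - rw Hs'1. rw Hw1. symmetry. exact Hab'.
      - rw Hs'2. rw Hw2. reflexivity. }
    exists w. split; [exact Ws1|]. split; [exact Hw1|].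
    intros w' A1 A2. apply (pb_ext HP').
    - rewrite A2, Hw1. reflexivity.
    - rewrite Hw2, <- A1. rnorm. rw Hs'2. reflexivity. }
  destruct (trivfib_pullback C Q1 P Pi P' s q1 s' p1 Fs Ws Hsq2) as [_ Ws'].
  assert (Wr' : weq r') by (apply (weq_section s' r'); auto).
  destruct (pb_lift HP' D G (q2 ∘ al)) as [G' [HG'1 HG'2]].
  { rnorm. rw HG1. rw EQ1. reflexivity. }
  exists P', r', s', t'. split.
  - exists QQ, y1, y2, u'. split; [exact HQQ|]. repeat split; auto.
  - exists G'. split.
    + apply (pb_ext HQ1); rnorm.
      * rw Hs'1. rw HG'1. exact HG1.
      * rw Hs'2. rw HG'2. reflexivity.
    + apply (pb_ext HQ1); rnorm.
      * rw Ht'1. rw HG'1. exact HG2.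
      * rw Ht'2. rw HG'2. exact Hab.
Qed.


Lemma pb_paste {D J K I E E' : C} (h : Hom D J) (g : Hom K J) (f : Hom I K)
  (e1' : Hom E' D) (e2' : Hom E' K) (e1 : Hom E D) (e2 : Hom E I) (y : Hom E E') :
  is_pullback h g E' e1' e2' -> is_pullback h (g ∘ f) E e1 e2 ->
  e1' ∘ y = e1 -> e2' ∘ y = f ∘ e2 -> is_pullback e2' f E y e2.
Proof.
  intros HE' HE Hy1 Hy2. split; [exact Hy2|].
  pose proof (proj1 HE') as E'e.
  intros Z u v Huv.
  destruct (pb_lift HE Z (e1' ∘ u) v) as [w [Hw1 Hw2]].
  { rnorm. rw E'e. rw Huv. reflexivity. }
  assert (Hyw : y ∘ w = u).
  { apply (pb_ext HE'); rnorm.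
    - rw Hy1. exact Hw1.
    - rw Hy2. rw Hw2. symmetry; exact Huv. }
  exists w. split; [exact Hyw|]. split; [exact Hw2|].
  intros w' A1 A2. apply (pb_ext HE).
  - rewrite Hw1, <- A1. rnorm. rw Hy1. reflexivity.
  - rewrite A2, Hw2. reflexivity.
Qed.

Lemma hPi_comp (strong : bool) {X I K J : C} (d : Hom X I) (f : Hom I K) (g : Hom K J)
  (Pi1 : C) (pi1 : Hom Pi1 K) (Pi2 : C) (pi2 : Hom Pi2 J) :
  fib d -> fib f -> fib g -> is_hPi strong d f Pi1 pi1 -> is_hPi strong pi1 g Pi2 pi2 ->
  is_hPi strong d (g ∘ f) Pi2 pi2.
Proof.
  intros Fd Ff Fg [Fpi1 [Q1 [q11 [q12 [eps1 [HQ1 [Heps1 [W1 S1]]]]]]]]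
                  [Fpi2 [Q2 [q21 [q22 [eps2 [HQ2 [Heps2 [W2 S2]]]]]]]].
  split; [exact Fpi2|].
  assert (Fq12 : fib q12) by (apply (pb_fib _ _ _ _ (pb_sym _ _ _ _ HQ1) Fpi1)).
  pose proof (proj1 HQ1) as EQ1. pose proof (proj1 HQ2) as EQ2.
  destruct (fib_pullback C I Pi2 J pi2 (g ∘ f) Fpi2) as [Q [b [a [HQ' _]]]].
  pose proof (pb_sym _ _ _ _ HQ') as HQ.
  assert (EQ : pi2 ∘ a = g ∘ (f ∘ b)) by (rewrite comp_assoc; symmetry; exact (proj1 HQ')).
  destruct (pb_lift HQ2 Q a (f ∘ b) EQ) as [c [Hc1 Hc2]].
  destruct (pb_lift HQ1 Q (eps2 ∘ c) b) as [e [He1 He2]].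
  { rnorm. rw Heps2. exact Hc2. }
  assert (Key : forall D (h : Hom D J) (k : Hom D Pi2) (E E' : C) (e1 : Hom E D) (e2 : Hom E I)
            (e1' : Hom E' D) (e2' : Hom E' K) (y : Hom E E') (w : Hom E Q) (w2 : Hom E' Q2),
            e1' ∘ y = e1 -> e2' ∘ y = f ∘ e2 -> a ∘ w = k ∘ e1 -> b ∘ w = e2 ->
            q21 ∘ w2 = k ∘ e1' -> q22 ∘ w2 = e2' ->
            q11 ∘ (e ∘ w) = eps2 ∘ w2 ∘ y /\ q12 ∘ (e ∘ w) = e2).
  { intros D h k E E' e1 e2 e1' e2' y w w2 Hy1 Hy2 Hw1 Hw2 Hw21 Hw22.
    assert (Hcw : c ∘ w = w2 ∘ y).
    { apply (pb_ext HQ2); rnorm.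
      - rw Hc1. rw Hw21. rw Hy1. exact Hw1.
      - rw Hc2. rw Hw22. rw Hy2. rw Hw2. reflexivity. }
    split; rnorm.
    - rw He1. rewrite Hcw. reflexivity.
    - rw He2. exact Hw2. }
  exists Q, a, b, (eps1 ∘ e). split; [exact HQ|]. split.
  { rnorm. rw Heps1. exact He2. }
  split.
  - intros D h E e1 e2 HE m Hm.
    destruct (fib_pullback C D K J g h Fg) as [E' [e1' [e2' [HE' _]]]].
    destruct (pb_lift HE' E e1 (f ∘ e2)) as [y [Hy1 Hy2]].
    { rewrite comp_assoc. exact (proj1 HE). }
    pose proof (pb_paste h g f e1' e2' e1 e2 y HE' HE Hy1 Hy2) as HEy.
    destruct (W1 E' e2' E y e2 HEy m Hm) as [k1 [Hk1 Hk1w]].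
    destruct (W2 D h E' e1' e2' HE' k1 Hk1) as [k [Hk Hkw]].
    exists k. split; [exact Hk|].
    intros w Hw1 Hw2.
    destruct (pb_lift HQ2 E' (k ∘ e1') e2') as [w2 [Hw21 Hw22]].
    { rnorm. rw Hk. exact (proj1 HE'). }
    destruct (Key D h k E E' e1 e2 e1' e2' y w w2 Hy1 Hy2 Hw1 Hw2 Hw21 Hw22) as [K1 K2].
    destruct (Hkw w2 Hw21 Hw22) as [P [r [s [t [HP [H [HH1 HH2]]]]]]].
    destruct (pb_lift HQ1 E (k1 ∘ y) e2) as [be [Hbe1 Hbe2]].
    { rnorm. rw Hk1. exact Hy2. }
    assert (Hal : fhtpy q12 (e ∘ w) be).
    { apply (htpy_pb pi1 f q11 q12 r s t (e ∘ w) be (H ∘ y)); auto.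
      - rnorm. rw HH1. rewrite K1. rnorm. reflexivity.
      - rnorm. rw HH2. rewrite Hbe1. reflexivity.
      - rewrite K2, Hbe2. reflexivity. }
    destruct (Hk1w be Hbe1 Hbe2) as [PX [rX [sX [tX [HPX [G2 [HG21 HG22]]]]]]].
    destruct (htpy_map q12 d eps1 (e ∘ w) be PX rX sX tX Fd Fq12 Heps1 Hal HPX)
      as [G1 [HG11 HG12]].
    pose proof (htpy_trans d rX sX tX G1 G2 Fd HPX) as T.
    rewrite HG11, HG22 in T. rewrite <- comp_assoc. apply T.
    rewrite HG12, HG21. reflexivity.
  - intros Hs D k k' Hkk E e1 e2 HE w w' Hw1 Hw2 Hw1' Hw2' Hh.
    destruct (fib_pullback C D K J g (pi2 ∘ k) Fg) as [E' [e1' [e2' [HE' _]]]].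
    destruct (pb_lift HE' E e1 (f ∘ e2)) as [y [Hy1 Hy2]].
    { rewrite comp_assoc. exact (proj1 HE). }
    pose proof (pb_paste (pi2 ∘ k) g f e1' e2' e1 e2 y HE' HE Hy1 Hy2) as HEy.
    destruct (pb_lift HQ2 E' (k ∘ e1') e2') as [w2 [Hw21 Hw22]].
    { rewrite comp_assoc. exact (proj1 HE'). }
    destruct (pb_lift HQ2 E' (k' ∘ e1') e2') as [w2' [Hw21' Hw22']].
    { rewrite comp_assoc, <- Hkk. exact (proj1 HE'). }
    apply (S2 Hs D k k' Hkk E' e1' e2' HE' w2 w2' Hw21 Hw22 Hw21' Hw22').
    assert (P1 : pi1 ∘ (eps2 ∘ w2) = e2') by (rnorm; rw Heps2; exact Hw22).
    assert (P2 : pi1 ∘ (eps2 ∘ w2') = e2') by (rnorm; rw Heps2; exact Hw22').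
    destruct (Key D (pi2 ∘ k) k E E' e1 e2 e1' e2' y w w2 Hy1 Hy2 Hw1 Hw2 Hw21 Hw22) as [K1 K2].
    destruct (Key D (pi2 ∘ k) k' E E' e1 e2 e1' e2' y w' w2' Hy1 Hy2 Hw1' Hw2' Hw21' Hw22')
      as [K1' K2'].
    rewrite <- P1 in HEy.
    refine (S1 Hs E' (eps2 ∘ w2) (eps2 ∘ w2') _ E y e2 HEy (e ∘ w) (e ∘ w') K1 K2 _ K2' _).
    + rewrite P1, P2. reflexivity.
    + rewrite K1'. reflexivity.
    + rewrite !comp_assoc. exact Hh.
Qed.


Lemma closure_strong (strong : bool) (Dc : MapClass) :
  is_display_class strong Dc ->
  forall (I J : C) (f : Hom I J), comp_closure Dc I J f ->
  fib f /\ forall (X : C) (d : Hom X I), Dc X I d ->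
    exists (Pi : C) (pi : Hom Pi J), is_hPi strong d f Pi pi /\ Dc Pi J pi.
Proof.
  intros [HF [_ [_ HPi]]] I J f Hc.
  induction Hc as [X Y f Hf | X Y Z f g Hf IHf Hg IHg].
  - split; [apply HF; auto|]. intros X0 d Hd. apply HPi; auto.
  - destruct IHf as [Ff IHf]. destruct IHg as [Fg IHg].
    split; [apply fib_comp; auto|].
    intros X0 d Hd.
    destruct (IHf X0 d Hd) as [Pi1 [pi1 [H1 D1]]].
    destruct (IHg Pi1 pi1 D1) as [Pi2 [pi2 [H2 D2]]].
    exists Pi2, pi2. split; auto.
    apply (hPi_comp strong d f g Pi1 pi1 Pi2 pi2); auto.
Qed.

End PC.

Theorem lemma6p4 (strong : bool) (C : PathCategory) (Dc : @MapClass C) :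
  is_display_class strong Dc ->
  forall (X I J : C) (d : Hom X I) (f : Hom I J),
    Dc X I d -> comp_closure Dc I J f ->
    exists (Pi : C) (pi : Hom Pi J), is_hPi strong d f Pi pi.
Proof.
  intros HD X I J d f Hd Hf.
  destruct (closure_strong strong Dc HD I J f Hf) as [_ H].
  destruct (H X d Hd) as [Pi [pi [H1 _]]]. eauto.
Qed.
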